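(* Let $n\ge0$. For every Schröder path $\gamma$ of semi-length $n$, in the poset $\mathcal{S}_n$ we have $|\Delta\gamma|=\omega_H(\gamma)+\omega_{DU}(\gamma)$ and $|\nabla\gamma|=\omega^*_H(\gamma)+\omega_{UD}(\gamma)$. For every Grand Schröder path $\gamma$ of semi-length $n$, in the poset $\mathcal{GS}_n$ we have $|\Delta\gamma|=\omega_H(\gamma)+\omega_{DU}(\gamma)$ and $|\nabla\gamma|=\omega_H(\gamma)+\omega_{UD}(\gamma)$.
   Context: Steps: $U=(1,1)$, $D=(1,-1)$, $H=(2,0)$. A Grand Schröder path of semi-length $n$ is a lattice path from $(0,0)$ to $(2n,0)$ with steps $U,D,H$; a Schröder path is a Grand Schröder path never going below the $x$-axis. $\mathcal{S}_n$ (resp. $\mathcal{GS}_n$) is the set of Schröder (resp. Grand Schröder) paths of semi-length $n$, partially ordered by $\gamma_1\le\gamma_2$ iff $\gamma_1$ lies weakly below $\gamma_2$. $\Delta x$ is the set of elements covering $x$ and $\nabla x$ the set of elements covered by $x$. Paths are identified with words of steps; $\omega_\alpha(\gamma)$ is the number of occurrences of the word $\alpha$ as a factor of $\gamma$; $\omega^*_H(\gamma)$ is the number of $H$ steps of $\gamma$ not lying on the $x$-axis. *)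

(* Defs.v *)
From HB Require Import structures.
From mathcomp Require Import all_boot all_order all_algebra.
Set Implicit Arguments. Unset Strict Implicit. Unset Printing Implicit Defensive.
Import GRing.Theory Num.Theory.
Local Open Scope ring_scope.

(* Steps: U = (1,1), D = (1,-1), H = (2,0). *)
Inductive step := U | D | H.

Definition step_eqb (a b : step) : bool :=
  match a, b with U, U | D, D | H, H => true | _, _ => false end.
Lemma step_eqP : Equality.axiom step_eqb.
Proof. by case; case; constructor. Qed.
HB.instance Definition _ := hasDecEq.Build step step_eqP.

Definition spath := seq step.

Definition width (w : spath) : nat :=
  sumn [seq (match s with H => 2 | _ => 1 end) | s <- w].

Fixpoint hend (w : spath) : int :=
  match w with
  | [::] => 0
  | U :: w' => 1 + hend w'
  | D :: w' => -1 + hend w'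
  | H :: w' => hend w'
  end.

(* height of the spath w at the integer abscissa x (0 <= x <= width w);
   the path is piecewise linear with breakpoints at integer abscissae
   (the midpoint of an H step is at the same height as its ends). *)
Fixpoint hgt (w : spath) (x : nat) : int :=
  match w with
  | [::] => 0
  | s :: w' =>
      match s with
      | U => if x == 0%N then 0 else 1 + hgt w' x.-1
      | D => if x == 0%N then 0 else -1 + hgt w' x.-1
      | H => if (x <= 1)%N then 0 else hgt w' (x - 2)
      end
  end.

(* Grand Schröder spath of semi-length n: from (0,0) to (2n,0). *)
Definition grand (n : nat) (w : spath) : bool :=
  (width w == 2 * n)%N && (hend w == 0).

Definition schroder (n : nat) (w : spath) : bool :=
  grand n w && all (fun i => 0 <= hend (take i w)) (iota 0 (size w).+1).

Fixpoint words (k : nat) : seq spath :=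
  match k with
  | 0 => [:: [::]]
  | k'.+1 =>
      [seq U :: w | w <- words k'] ++ [seq D :: w | w <- words k'] ++
      match k' with 0 => [::] | k''.+1 => [seq H :: w | w <- words k''] end
  end.

Definition GSn (n : nat) : seq spath := undup [seq w <- words (2 * n) | grand n w].
Definition Sn (n : nat) : seq spath := undup [seq w <- words (2 * n) | schroder n w].

Definition below (n : nat) (w1 w2 : spath) : bool :=
  all (fun x => hgt w1 x <= hgt w2 x) (iota 0 (2 * n).+1).
Definition sbelow (n : nat) (w1 w2 : spath) : bool := below n w1 w2 && (w1 != w2).

Definition covers (n : nat) (P : seq spath) (x y : spath) : bool :=
  sbelow n x y && ~~ has (fun z => sbelow n x z && sbelow n z y) P.

Definition Delta (n : nat) (P : seq spath) (x : spath) : seq spath :=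
  [seq y <- P | covers n P x y].
Definition Nabla (n : nat) (P : seq spath) (x : spath) : seq spath :=
  [seq y <- P | covers n P y x].

Definition omega (a w : spath) : nat :=
  count (fun i => prefix a (drop i w)) (iota 0 (size w).+1).

Definition omegaHstar (w : spath) : nat :=
  count (fun i => (nth U w i == H) && (hend (take i w) != 0)) (iota 0 (size w)).

(* Main.v *)
Require Import Defs.
From HB Require Import structures.
From mathcomp Require Import all_boot all_order all_algebra.
From mathcomp Require Import zify ring lra.
Set Implicit Arguments. Unset Strict Implicit. Unset Printing Implicit Defensive.
Import GRing.Theory Num.Theory.
Local Open Scope ring_scope.

Inductive unt := Up | Dn | F1 | F2.
Definition dif (u : unt) : int := match u with Up => 1 | Dn => -1 | _ => 0 end.
Definition un1 (s : step) : seq unt :=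
  match s with U => [:: Up] | D => [:: Dn] | H => [:: F1; F2] end.
Fixpoint un (w : spath) : seq unt :=
  match w with [::] => [::] | s :: w' => un1 s ++ un w' end.
Fixpoint uh (a : seq unt) (t : nat) : int :=
  match a with [::] => 0 | u :: a' => if t is t'.+1 then dif u + uh a' t' else 0 end.

Lemma un_cat a b : un (a ++ b) = un a ++ un b.
Proof. by elim: a => //= s a ->; rewrite catA. Qed.

Lemma width_cons s w : width (s :: w) = (size (un1 s) + width w)%N.
Proof. by case: s. Qed.

Lemma width_cat a b : width (a ++ b) = (width a + width b)%N.
Proof. by rewrite /width map_cat sumn_cat. Qed.

Lemma size_un w : size (un w) = width w.
Proof. by elim: w => //= s w IH; rewrite size_cat IH width_cons. Qed.

Lemma hgt_uh w t : hgt w t = uh (un w) t.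
Proof.
elim: w t => [|s w IH] t /=; first by case: t.
case: s => /=.
- by case: t => //= t; rewrite IH.
- by case: t => //= t; rewrite IH.
- by case: t => [|[|t]] //=; rewrite add0r add0r IH subn2.
Qed.

Lemma uh0 a : uh a 0 = 0.
Proof. by case: a. Qed.

Lemma uh_cat a b t : uh (a ++ b) t = uh a t + uh b (t - size a).
Proof.
elim: a t => [|u a IH] t /=; first by rewrite add0r subn0.
case: t => [|t]; first by rewrite uh0 addr0.
by rewrite IH subSS addrA.
Qed.

Lemma uh_sat a t : (size a <= t)%N -> uh a t = uh a (size a).
Proof.
elim: a t => [|u a IH] [|t] //= Ht; by rewrite IH.
Qed.

Lemma uh_S a t : uh a t.+1 = uh a t + dif (nth F2 a t).
Proof.
elim: a t => [|u a IH] t /=; first by case: t => [|t]; rewrite /= ?addr0 ?nth_nil.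
case: t => [|t] /=; first by rewrite uh0 addr0 add0r.
by rewrite IH addrA.
Qed.

Lemma hend_uh w : hend w = uh (un w) (width w).
Proof.
elim: w => [|s w IH] //=; case: s => //=; rewrite IH ?width_cons //.
by rewrite /= add0r add0r.
Qed.

Lemma hgtS w t : hgt w t.+1 = hgt w t + dif (nth F2 (un w) t).
Proof. by rewrite !hgt_uh uh_S. Qed.

Lemma hgt_sat w t : (width w <= t)%N -> hgt w t = hend w.
Proof. by move=> Ht; rewrite hgt_uh hend_uh uh_sat size_un. Qed.

Lemma hgt0 w : hgt w 0 = 0.
Proof. by rewrite hgt_uh uh0. Qed.

Lemma dif_bnd u : -1 <= dif u <= 1.
Proof. by case: u. Qed.
Definition sd (s : step) : int := match s with U => 1 | D => -1 | H => 0 end.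

Lemma hgt_at C s r : hgt (C ++ s :: r) (width C).+1 = hend C + sd s.
Proof.
rewrite hgt_uh un_cat uh_cat size_un uh_sat ?size_un // hend_uh subSn // subnn.
by case: s => /=; rewrite ?uh0 ?addr0.
Qed.

Lemma hgt_atC C r : hgt (C ++ r) (width C) = hend C.
Proof. by rewrite hgt_uh un_cat uh_cat size_un subnn uh0 addr0 hend_uh. Qed.

Lemma width0 w : width w = 0%N -> w = [::].
Proof. by case: w => // s w; rewrite width_cons; case: s. Qed.

Lemma split_diff (x y : spath) : x <> y -> width x = width y ->
  exists C s t x1 y1, s <> t /\ x = C ++ s :: x1 /\ y = C ++ t :: y1.
Proof.
elim: x y => [|s x IH] [|t y] //.
- by move=> _ /esym /width0.
- by move=> _ /width0.
case: (eqVneq s t) => [<-|st] Hne Hw.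
- have Hne' : x <> y by move=> E; apply: Hne; rewrite E.
  have Hw' : width x = width y by move: Hw; rewrite !width_cons => /addnI.
  have [C [s' [t' [x1 [y1 [st' [-> ->]]]]]]] := IH y Hne' Hw'.
  by exists (s :: C), s', t', x1, y1.
- by exists [::], s, t, x, y; split => //; apply/eqP.
Qed.

Lemma sd_inj s t : sd s = sd t -> s = t.
Proof. by case: s; case: t. Qed.

Lemma hgt_inj x y : width x = width y ->
  (forall t, (t <= width x)%N -> hgt x t = hgt y t) -> x = y.
Proof.
move=> Hw Hh; apply/eqP; apply/negPn/negP => /eqP Hne.
have [C [s [t [x1 [y1 [st [Ex Ey]]]]]]] := split_diff Hne Hw.
have : hgt x (width C).+1 = hgt y (width C).+1.
  apply: Hh; rewrite Ex width_cat width_cons; case: s {Ex st} => /=; lia.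
rewrite Ex Ey !hgt_at => /addrI /sd_inj; exact: st.
Qed.
Lemma winF1 x j : nth F2 (un x) j = F1 -> exists A B, x = A ++ H :: B /\ width A = j.
Proof.
elim: x j => [|s x IH] j /=; first by rewrite nth_nil.
case: s => /=.
- case: j => //= j /IH [A [B [-> <-]]]; exists (U :: A), B; split => //; rewrite ?width_cons /=; lia.
- case: j => //= j /IH [A [B [-> <-]]]; exists (D :: A), B; split => //; rewrite ?width_cons /=; lia.
- case: j => [|[|j]] //= .
  + by move=> _; exists [::], x.
  + move=> /IH [A [B [-> <-]]]; exists (H :: A), B; split => //; rewrite ?width_cons /=; lia.
Qed.

Lemma winDU x j : nth F2 (un x) j = Dn -> nth F2 (un x) j.+1 = Up ->
  exists A B, x = A ++ D :: U :: B /\ width A = j.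
Proof.
elim: x j => [|s x IH] j /=; first by rewrite nth_nil.
case: s => /=.
- case: j => //= j E1 E2; have [A [B [-> <-]]] := IH j E1 E2.
  exists (U :: A), B; split => //; rewrite ?width_cons /=; lia.
- case: j => /= [_|j E1 E2].
  + case: x {IH} => [|[] x] //= _; by exists [::], x.
  + have [A [B [-> <-]]] := IH j E1 E2.
    exists (D :: A), B; split => //; rewrite ?width_cons /=; lia.
- case: j => [|[|j]] //= E1 E2; have [A [B [-> <-]]] := IH j E1 E2.
  exists (H :: A), B; split => //; rewrite ?width_cons /=; lia.
Qed.

Lemma noDnF2 x k : nth F2 (un x) k = Dn -> (k.+1 < width x)%N ->
  nth F2 (un x) k.+1 <> F2.
Proof.
elim: x k => [|s x IH] k /=; first by rewrite nth_nil.
rewrite width_cons; case: s => /=.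
- case: k => //= k E1 Hk; apply: IH => //; lia.
- case: k => /= [_|k E1 Hk].
  + case: x {IH} => [|[] x] //=.
  + apply: IH => //; lia.
- case: k => [|[|k]] //= E1 Hk; apply: IH => //; lia.
Qed.

Lemma hgt_mvUD A B t : hgt (A ++ U :: D :: B) t =
  hgt (A ++ H :: B) t + (if t == (width A).+1 then 1 else 0).
Proof.
rewrite !hgt_uh !un_cat !uh_cat /= size_un.
have -> : (t == (width A).+1) = ((t - width A)%N == 1%N).
  by apply/idP/idP => /eqP ?; apply/eqP; lia.
by case: (t - width A)%N => [|[|m]] /=; rewrite ?uh0; ring.
Qed.

Lemma hgt_mvDU A B t : hgt (A ++ D :: U :: B) t +
  (if t == (width A).+1 then 1 else 0) = hgt (A ++ H :: B) t.
Proof.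
rewrite !hgt_uh !un_cat !uh_cat /= size_un.
have -> : (t == (width A).+1) = ((t - width A)%N == 1%N).
  by apply/idP/idP => /eqP ?; apply/eqP; lia.
by case: (t - width A)%N => [|[|m]] /=; rewrite ?uh0; ring.
Qed.

Definition up1 (x y : spath) : Prop :=
  (exists A B, x = A ++ H :: B /\ y = A ++ U :: D :: B) \/
  (exists A B, x = A ++ D :: U :: B /\ y = A ++ H :: B).

Lemma up1_hgt x y : up1 x y -> exists k, (k.+1 < width x)%N /\ width y = width x /\
  forall t, hgt y t = hgt x t + (if t == k.+1 then 1 else 0).
Proof.
case=> [[A [B [-> ->]]]|[A [B [-> ->]]]]; exists (width A).
- rewrite !width_cat !width_cons /=; split; first lia; split; first lia.
  by move=> t; rewrite hgt_mvUD.
- rewrite !width_cat !width_cons /=; split; first lia; split; first lia.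
  by move=> t; rewrite hgt_mvDU.
Qed.

Lemma scan x y : width x = width y -> hend x = hend y ->
  forall m k, (width x - k)%N = m -> nth F2 (un x) k = Dn ->
  (2 <= hgt y k.+1 - hgt x k.+1 \/
   (hgt y k.+1 - hgt x k.+1 = 1 /\ nth F2 (un y) k.+1 = F2)) ->
  exists j, ((nth F2 (un x) j = Dn /\ nth F2 (un x) j.+1 = Up) \/
             nth F2 (un x) j = F1) /\ hgt x j.+1 < hgt y j.+1.
Proof.
move=> Hw He m; elim: m => [|m IH] k Hm Hk Hg.
- exfalso; rewrite !hgt_sat ?He ?subrr in Hg; [|lia|lia].
  by case: Hg => [|[]].
- have Hlt : (k.+1 < width x)%N.
    rewrite ltnNge; apply/negP => Hle.
    rewrite !hgt_sat ?He ?subrr in Hg; [|lia|lia].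
    by case: Hg => [|[]].
  have Hg1 : hgt x k.+1 < hgt y k.+1 by case: Hg => [|[]]; lia.
  case E: (nth F2 (un x) k.+1).
  + by exists k; split => //; left.
  + apply: (IH k.+1) => //; first lia.
    left; rewrite !(hgtS _ k.+1) E /=.
    have := dif_bnd (nth F2 (un y) k.+1).
    case: Hg => [|[Hg ->]] /=; lia.
  + exists k.+1; split; first by right.
    rewrite !(hgtS _ k.+1) E /=.
    have := dif_bnd (nth F2 (un y) k.+1).
    case: Hg => [|[Hg ->]] /=; lia.
  + by exfalso; exact: (noDnF2 Hk Hlt E).
Qed.

Lemma bump_le x x' y W j :
  (forall t, hgt x' t = hgt x t + (if t == j.+1 then 1 else 0)) ->
  (forall t, (t <= W)%N -> hgt x t <= hgt y t) -> hgt x j.+1 < hgt y j.+1 ->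
  forall t, (t <= W)%N -> hgt x' t <= hgt y t.
Proof.
move=> E Hle Hlt t Ht; rewrite E; case: eqP => [->|_]; first lia.
by rewrite addr0; apply: Hle.
Qed.

Lemma core x y : width x = width y -> hend x = hend y ->
  (forall t, (t <= width x)%N -> hgt x t <= hgt y t) -> x <> y ->
  exists x', up1 x x' /\ forall t, (t <= width x)%N -> hgt x' t <= hgt y t.
Proof.
move=> Hw He Hh Hne.
have [C [s [t [x1 [y1 [st [Ex Ey]]]]]]] := split_diff Hne Hw.
have Hb : ((width C).+1 <= width x)%N.
  rewrite Ex width_cat width_cons; case: (s) => /=; lia.
have := Hh _ Hb; rewrite {1}Ex {1}Ey !hgt_at lerD2l => Hsd.
have scanit : s = D -> sd t + 1 = 2 \/ (sd t = 0 /\ nth F2 (un y) (width C).+1 = F2) ->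
    exists x', up1 x x' /\ forall t, (t <= width x)%N -> hgt x' t <= hgt y t.
  move=> Es Hc.
  have Hk : nth F2 (un x) (width C) = Dn.
    by rewrite Ex un_cat nth_cat size_un ltnn subnn Es.
  have Hg : 2 <= hgt y (width C).+1 - hgt x (width C).+1 \/
   (hgt y (width C).+1 - hgt x (width C).+1 = 1 /\ nth F2 (un y) (width C).+1 = F2).
    rewrite {1 2}Ex {1 2}Ey !hgt_at Es /=.
    case: Hc => [H2|[H0 H3]]; [left|right]; first lia.
    by split => //; lia.
  have [j [Hwin Hs]] := scan Hw He (erefl _) Hk Hg.
  case: Hwin => [[E1 E2]|E1].
  - have [A [B [EA WA]]] := winDU E1 E2.
    exists (A ++ H :: B); split; first by right; exists A, B.
    apply: (bump_le _ Hh Hs) => t'.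
    by rewrite -hgt_mvDU -EA WA.
  - have [A [B [EA WA]]] := winF1 E1.
    exists (A ++ U :: D :: B); split; first by left; exists A, B.
    apply: (bump_le _ Hh Hs) => t'.
    by rewrite hgt_mvUD -EA WA.
case: s t st Hsd Ex Ey scanit => [] [] //= _ Hsd Ex Ey scanit.
- apply: scanit => //; left; done.
- apply: scanit => //; right; split => //.
  by rewrite Ey un_cat nth_cat size_un ltnNge leqnSn /= subSn // subnn.
- exists (C ++ U :: D :: x1); split; first by left; exists C, x1.
  move=> t' Ht'; rewrite hgt_mvUD -Ex; case: eqP => [->|_].
  + by rewrite Ex Ey !hgt_at /= addr0.
  + by rewrite addr0; apply: Hh.
Qed.
Lemma belowP n x y :
  reflect (forall t, (t <= 2 * n)%N -> hgt x t <= hgt y t) (below n x y).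
Proof.
apply: (iffP allP) => Hb t.
- by move=> Ht; apply: Hb; rewrite mem_iota; lia.
- by rewrite mem_iota => Ht; apply: Hb; lia.
Qed.

Lemma hend_hgt w : hend w = hgt w (width w).
Proof. by rewrite hgt_sat. Qed.

Lemma grandP n x : grand n x -> width x = (2 * n)%N /\ hend x = 0.
Proof. by case/andP => /eqP -> /eqP ->. Qed.

Lemma up1_grand n x y : up1 x y -> grand n x -> grand n y.
Proof.
move=> /up1_hgt [k [Hk [Hw Hh]]] /grandP [Wx Ex].
apply/andP; split; first by rewrite Hw Wx.
rewrite hend_hgt Hh Hw -hend_hgt Ex.
have -> : (width x == k.+1) = false by apply/eqP; lia.
by rewrite addr0.
Qed.

Lemma up1_neq x y : up1 x y -> x != y.
Proof.
move=> /up1_hgt [k [Hk [Hw Hh]]]; apply/eqP => E.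
by move: (Hh k.+1); rewrite -E eqxx; lia.
Qed.

Definition Pgood n (P : seq spath) :=
  (forall x, x \in P -> grand n x) /\ (forall x y, x \in P -> up1 x y -> y \in P).

Lemma covers_up n P x y : Pgood n P -> x \in P -> y \in P ->
  covers n P x y <-> up1 x y.
Proof.
move=> [PG PC] xP yP.
have [Wx Ex] := grandP (PG _ xP); have [Wy Ey] := grandP (PG _ yP).
split.
- move=> /andP [/andP [/belowP bxy nxy] nh].
  have [x' [U1 Hx']] : exists x', up1 x x' /\
      forall t, (t <= width x)%N -> hgt x' t <= hgt y t.
    apply: core; [lia | by rewrite Ex Ey | by move=> t; rewrite Wx; apply: bxy |].
    by apply/eqP.
  case: (eqVneq x' y) => [<- //|ne]; exfalso.
  move/hasPn: nh => /(_ x' (PC _ _ xP U1)); rewrite negb_and => /orP [] /negP; apply.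
  + have [k [Hk [Hw Hh]]] := up1_hgt U1.
    rewrite /sbelow up1_neq // andbT; apply/belowP => t _; rewrite Hh.
    by case: eqP => _; lia.
  + rewrite /sbelow ne andbT; apply/belowP => t Ht; apply: Hx'; lia.
- move=> U1; have [k [Hk [Hw Hh]]] := up1_hgt U1.
  apply/andP; split.
    rewrite /sbelow up1_neq // andbT; apply/belowP => t _; rewrite Hh.
    by case: eqP => _; lia.
  apply/hasPn => z zP; apply/negP => /andP [/andP [/belowP bxz nxz] /andP [/belowP bzy nzy]].
  have [Wz Ez] := grandP (PG _ zP).
  case: (boolP (hgt z k.+1 == hgt x k.+1)) => [/eqP E|E].
  + move/eqP: nxz; apply; apply: hgt_inj; first lia.
    move=> t Ht; case: (eqVneq t k.+1) => [->|ne]; first by rewrite E.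
    have := bxz t ltac:(lia); have := bzy t ltac:(lia).
    rewrite Hh (negPf ne); lia.
  + move/eqP: nzy; apply; apply: hgt_inj; first lia.
    move=> t Ht; have := bxz t ltac:(lia); have := bzy t ltac:(lia).
    rewrite Hh; case: (eqVneq t k.+1) => [->|ne]; last lia.
    move: E => /eqP; lia.
Qed.
Lemma mem_consmap (s t : step) w (l : seq spath) :
  (s :: w \in [seq t :: v | v <- l]) = (s == t) && (w \in l).
Proof.
apply/mapP/andP => [[v vl [-> ->]]|[/eqP -> wl]]; last by exists w.
by split.
Qed.

Lemma mem_nilmap (t : step) (l : seq spath) : ([::] \in [seq t :: v | v <- l]) = false.
Proof. by apply/mapP => [[v _]]. Qed.

Lemma mem_words k w : (w \in words k) = (width w == k).
Proof.
elim/ltn_ind: k w => k IH w.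
case: k IH => [|k] IH.
- rewrite /= inE; case: w => [|s w] //=.
  by rewrite width_cons; case: s.
- rewrite /= !mem_cat; case: w => [|s w].
  + by rewrite !mem_nilmap /=; case: (k) => [|k'] //; rewrite mem_nilmap.
  + rewrite !mem_consmap width_cons; case: s => /=.
    * rewrite IH //; case: (k) => [|k'] //=; rewrite ?mem_consmap /= ?orbF //.
    * rewrite IH //; case: (k) => [|k'] //=; rewrite ?mem_consmap /= ?orbF //.
    * case: (k) IH => [|k'] IH //=.
      by rewrite mem_consmap IH.
Qed.

Lemma mem_GSn n y : (y \in GSn n) = grand n y.
Proof.
rewrite mem_undup mem_filter mem_words.
by apply/andP/idP => [[]//|G]; split => //; case/andP: G.
Qed.

Lemma mem_Sn n y : (y \in Sn n) = schroder n y.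
Proof.
rewrite mem_undup mem_filter mem_words.
by apply/andP/idP => [[]//|G]; split => //; case/andP: G => /andP [].
Qed.

Lemma hend_cons s w : hend (s :: w) = sd s + hend w.
Proof. by case: s => //=; rewrite add0r. Qed.

Lemma nonneg_gen w c : (forall i, (i <= size w)%N -> 0 <= c + hend (take i w)) <->
  (forall t, 0 <= c + hgt w t).
Proof.
elim: w c => [|s w IH] c.
- split=> Hh t.
  + by move: (Hh 0%N (leqnn _)); rewrite /= !addr0.
  + by move=> _; move: (Hh 0%N); rewrite /= !addr0.
- split => Hh.
  + have c0 : 0 <= c by move: (Hh 0%N (leq0n _)); rewrite take0 /= addr0.
    have Hw : forall t, 0 <= (c + sd s) + hgt w t.
      apply/IH => i Hi; move: (Hh i.+1 Hi).
      by rewrite (_ : take i.+1 (s :: w) = s :: take i w) // hend_cons addrA.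
    move=> t; case: s Hh Hw => /= Hh Hw.
    * case: t => [|t] /=; first by rewrite addr0.
      by move: (Hw t); rewrite addrA.
    * case: t => [|t] /=; first by rewrite addr0.
      by move: (Hw t); rewrite addrA.
    * case: (t <= 1)%N; first by rewrite addr0.
      by move: (Hw (t - 2)%N); rewrite addr0.
  + move=> [|i] Hi.
      by rewrite take0 /= addr0; move: (Hh 0%N); rewrite hgt0 addr0.
    rewrite (_ : take i.+1 (s :: w) = s :: take i w) // hend_cons addrA. move: i Hi; apply/IH => t.
    case: s Hh => /= Hh.
    * by move: (Hh t.+1); rewrite /= addrA.
    * by move: (Hh t.+1); rewrite /= addrA.
    * by move: (Hh t.+2); rewrite /= addr0 subn2.
Qed.

Lemma schroderP n w : schroder n w <-> grand n w /\ forall t, 0 <= hgt w t.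
Proof.
rewrite /schroder; split.
- case/andP => G /allP A; split => //.
  move=> t; rewrite -[hgt w t]add0r; apply: (proj1 (nonneg_gen w 0)) => i Hi.
  rewrite add0r; apply: A; rewrite mem_iota; lia.
- case => G N; apply/andP; split => //; apply/allP => i; rewrite mem_iota => Hi.
  rewrite -[hend _]add0r; apply: (proj2 (nonneg_gen w 0)); last lia.
  by move=> t; rewrite add0r.
Qed.
Definition mvl (x : spath) (pa pb : nat -> bool) (ca : spath) : seq spath :=
  [seq take i x ++ (if pa i then ca else [:: H]) ++ drop (if pa i then i.+1 else i.+2) x
  | i <- [seq i <- iota 0 (size x).+1 | pa i || pb i]].

Lemma drop_pref x i a s : drop i x = a :: s -> (i < size x)%N /\ nth H x i = a.
Proof.
move=> E; split.
- have := congr1 size E; rewrite size_drop /=; lia.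
- by rewrite -[i]addn0 -nth_drop E.
Qed.

Lemma mem_mvl x a b1 b2 (c : nat -> bool) ca y : a != b1 ->
  (y \in mvl x (fun i => prefix [:: a] (drop i x) && c i)
           (fun i => prefix [:: b1; b2] (drop i x)) ca) <->
  ((exists A B, x = A ++ a :: B /\ c (size A) /\ y = A ++ ca ++ B) \/
   (exists A B, x = A ++ b1 :: b2 :: B /\ y = A ++ H :: B)).
Proof.
move=> ab; split.
- case/mapP => i; rewrite mem_filter mem_iota => /andP [Hor /andP [_ iS]] ->.
  case: (boolP (prefix [:: a] (drop i x) && c i)) => [/andP [pa ci]|npa].
  + move/prefixP: pa => [s /= E]; left; exists (take i x), s.
    have Hi : (i <= size x)%N by lia.
    split; first by rewrite -E cat_take_drop.
    split; first by rewrite size_takel.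
    by rewrite -addn1 addnC -drop_drop E drop1.
  + rewrite (negPf npa) /= in Hor *; move/prefixP: Hor => [s /= E].
    right; exists (take i x), s; split; first by rewrite -E cat_take_drop.
    by rewrite -addn2 addnC -drop_drop E /= drop0.
- case => [[A [B [-> [cA ->]]]] | [A [B [-> ->]]]]; apply/mapP; exists (size A).
  + rewrite mem_filter mem_iota drop_size_cat //= eqxx prefix0s cA /= size_cat /=; lia.
  + rewrite drop_size_cat //= eqxx prefix0s cA /= take_size_cat // drop_cat ltnNge leqnSn /=.
    by rewrite subSn // subnn /= drop0.
  + rewrite mem_filter mem_iota drop_size_cat //= (negPf ab) !eqxx prefix0s /= size_cat /=; lia.
  + rewrite drop_size_cat //= (negPf ab) /= take_size_cat // drop_cat ltnNge.
    rewrite (leq_trans (leqnSn _) (leqnSn _)) /=.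
    by rewrite (_ : ((size A).+2 - size A)%N = 2%N) /= ?drop0 //; lia.
Qed.

Lemma uniq_F (x : spath) (I : seq nat) (F : nat -> spath) : uniq I ->
  (forall i, i \in I -> nth H (F i) i != nth H x i) ->
  (forall i j, i \in I -> j \in I -> (i < j)%N -> nth H (F j) i = nth H x i) ->
  uniq (map F I).
Proof.
move=> uI H1 H2; rewrite map_inj_in_uniq // => i j iI jI E.
case: (ltngtP i j) => [lt|gt|//].
- by move: (H1 i iI); rewrite -(H2 i j iI jI lt) E eqxx.
- by move: (H1 j jI); rewrite -(H2 j i jI iI gt) E eqxx.
Qed.

Lemma uniq_mvl x a b1 b2 (c : nat -> bool) h t : h != a -> H != b1 ->
  uniq (mvl x (fun i => prefix [:: a] (drop i x) && c i)
           (fun i => prefix [:: b1; b2] (drop i x)) (h :: t)).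
Proof.
move=> ha hb; rewrite /mvl; apply: (uniq_F (x:=x)); first by rewrite filter_uniq // iota_uniq.
- move=> i; rewrite mem_filter => /andP [Hor _]; rewrite /=.
  case: (boolP (prefix [:: a] (drop i x) && c i)) => [/andP [pa ci]|npa].
  + move/prefixP: pa => [s /= /drop_pref [Hi ->]].
    by rewrite nth_cat size_takel ?ltnn ?subnn //; lia.
  + rewrite (negPf npa) /= in Hor *; move/prefixP: Hor => [s /= /drop_pref [Hi ->]].
    by rewrite nth_cat size_takel ?ltnn ?subnn //; lia.
- move=> i j _; rewrite mem_filter mem_iota => /andP [_ /andP [_ Hj]] lt.
  by rewrite nth_cat size_takel ?lt ?nth_take //; lia.
Qed.

Lemma count_or (s : seq nat) (pa pb : nat -> bool) :
  (forall i, pa i -> pb i -> False) ->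
  count (fun i => pa i || pb i) s = (count pa s + count pb s)%N.
Proof.
move=> D; elim: s => //= i s ->; move: (D i).
case: (pa i); case: (pb i) => //= Di; try lia.
all: by case: (Di isT isT).
Qed.

Lemma size_mvl x a b1 b2 (c : nat -> bool) ca : a != b1 ->
  size (mvl x (fun i => prefix [:: a] (drop i x) && c i)
           (fun i => prefix [:: b1; b2] (drop i x)) ca) =
  (count (fun i => prefix [:: a] (drop i x) && c i) (iota 0 (size x).+1) +
   count (fun i => prefix [:: b1; b2] (drop i x)) (iota 0 (size x).+1))%N.
Proof.
move=> ab; rewrite size_map size_filter count_or // => i /andP [pa _] pb.
move/prefixP: pa => [s /= E]; move/prefixP: pb => [s' /= E'].
by move: E'; rewrite E => [[E2]]; move: ab; rewrite E2 eqxx.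
Qed.
Lemma size_filter_mem (P M : seq spath) (f : pred spath) : uniq P -> uniq M ->
  {subset M <= P} -> {in P, forall y, f y = (y \in M)} -> size (filter f P) = size M.
Proof.
move=> uP uM sub Hf; rewrite (eq_in_filter Hf); apply: perm_size.
apply: uniq_perm; [exact: filter_uniq | exact: uM |] => y.
rewrite mem_filter; case: (boolP (y \in M)) => //= yM; exact: sub.
Qed.

Lemma size_Delta n P g M : Pgood n P -> uniq P -> g \in P -> uniq M ->
  (forall y, y \in M <-> up1 g y) -> size (Delta n P g) = size M.
Proof.
move=> PG uP gP uM HM; apply: size_filter_mem => //.
- by move=> y /HM U1; apply: (proj2 PG) U1.
- move=> y yP; apply/idP/idP.
  + by move/(covers_up PG gP yP)/HM.
  + by move/HM/(covers_up PG gP yP).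
Qed.

Lemma size_Nabla n P g M : Pgood n P -> uniq P -> g \in P -> uniq M ->
  {subset M <= P} -> (forall y, y \in P -> (y \in M <-> up1 y g)) ->
  size (Nabla n P g) = size M.
Proof.
move=> PG uP gP uM sub HM; apply: size_filter_mem => //.
move=> y yP; apply/idP/idP.
- by move/(covers_up PG yP gP)/(HM y yP).
- by move/(HM y yP)/(covers_up PG yP gP).
Qed.

Definition UM g := mvl g (fun i => prefix [:: H] (drop i g) && true)
  (fun i => prefix [:: D; U] (drop i g)) [:: U; D].
Definition DM (c : nat -> bool) g := mvl g (fun i => prefix [:: H] (drop i g) && c i)
  (fun i => prefix [:: U; D] (drop i g)) [:: D; U].

Lemma mem_UM g y : y \in UM g <-> up1 g y.
Proof.
rewrite /UM mem_mvl //; split.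
- case=> [[A [B [E [_ ->]]]]|[A [B [E ->]]]]; [left|right]; by exists A, B.
- case=> [[A [B [E ->]]]|[A [B [E ->]]]]; [left|right]; by exists A, B.
Qed.

Lemma size_UM g : size (UM g) = (omega [:: H] g + omega [:: D; U] g)%N.
Proof.
rewrite /UM size_mvl //; congr (_ + _)%N.
by apply: eq_count => i; rewrite andbT.
Qed.

Lemma up1_grand_rev n x y : up1 x y -> grand n y -> grand n x.
Proof.
move=> /up1_hgt [k [Hk [Hw Hh]]] /grandP [Wy Ey].
apply/andP; split; first by rewrite -Hw Wy.
move: Ey; rewrite !hend_hgt Hh Hw.
have -> : (width x == k.+1) = false by apply/eqP; lia.
by rewrite addr0 => ->.
Qed.

Lemma PgoodGS n : Pgood n (GSn n).
Proof.
split; first by move=> x; rewrite mem_GSn.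
by move=> x y; rewrite !mem_GSn => G U1; apply: up1_grand U1 G.
Qed.

Lemma PgoodS n : Pgood n (Sn n).
Proof.
split; first by move=> x; rewrite mem_Sn => /schroderP [].
move=> x y; rewrite !mem_Sn => /schroderP [G N] U1; apply/schroderP; split.
  exact: up1_grand U1 G.
have [k [Hk [Hw Hh]]] := up1_hgt U1.
by move=> t; rewrite Hh; have := N t; case: eqP => _; lia.
Qed.

Lemma count_Hstar g :
  count (fun i => prefix [:: H] (drop i g) && (hend (take i g) != 0))
    (iota 0 (size g).+1) = omegaHstar g.
Proof.
rewrite /omegaHstar -addn1 iotaD count_cat /= drop_size /= !addn0.
apply: eq_in_count => i; rewrite mem_iota => /andP [_ Hi].
by rewrite (drop_nth U) //= prefix0s andbT; congr (_ && _); rewrite eq_sym.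
Qed.

Lemma dm_nonneg A B : (forall t, 0 <= hgt (A ++ H :: B) t) -> hend A != 0 ->
  forall t, 0 <= hgt (A ++ D :: U :: B) t.
Proof.
move=> N nz t; have E := hgt_mvDU A B t.
case: (eqVneq t (width A).+1) E => [->|ne] E.
- rewrite hgt_at /=; have := N (width A); rewrite hgt_atC.
  move: nz => /eqP; lia.
- by move: E; rewrite addr0 => ->.
Qed.

Lemma um_nonneg A B : (forall t, 0 <= hgt (A ++ U :: D :: B) t) ->
  forall t, 0 <= hgt (A ++ H :: B) t.
Proof.
move=> N t; have E := hgt_mvUD A B t.
case: (eqVneq t (width A).+1) E => [->|ne] E.
- rewrite hgt_at /= addr0; have := N (width A); by rewrite hgt_atC.
- by move: E; rewrite addr0 => <-.
Qed.
Lemma downS n g y : g \in Sn n -> y \in Sn n ->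
  (y \in DM (fun i => hend (take i g) != 0) g <-> up1 y g).
Proof.
move=> gP yP; rewrite /DM mem_mvl //; split.
- case=> [[A [B [Eg [_ ->]]]]|[A [B [Eg ->]]]]; [right|left]; by exists A, B.
- case=> [[A [B [Ey Eg]]]|[A [B [Ey Eg]]]]; [right|left]; exists A, B => //.
  split => //; split => //.
  rewrite Eg take_size_cat //; move: yP; rewrite mem_Sn => /schroderP [_ N].
  move: (N (width A).+1); rewrite Ey hgt_at /=.
  have := N (width A); rewrite Ey hgt_atC => h1 h2; apply/eqP; lia.
Qed.

Lemma downS_sub n g : g \in Sn n -> {subset DM (fun i => hend (take i g) != 0) g <= Sn n}.
Proof.
move=> gP y; rewrite /DM mem_mvl //; move: gP; rewrite !mem_Sn => /schroderP [G N].
case=> [[A [B [Eg [c Ey]]]]|[A [B [Eg Ey]]]]; apply/schroderP; split.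
- apply: (up1_grand_rev (y := g)) G; right; exists A, B; by rewrite Ey Eg.
- rewrite Eg take_size_cat // in c; rewrite Ey; apply: dm_nonneg => //.
  by rewrite -Eg.
- apply: (up1_grand_rev (y := g)) G; left; exists A, B; by rewrite Ey Eg.
- rewrite Ey; apply: um_nonneg; by rewrite -Eg.
Qed.

Lemma downGS g y : (y \in DM (fun _ => true) g <-> up1 y g).
Proof.
rewrite /DM mem_mvl //; split.
- case=> [[A [B [Eg [_ ->]]]]|[A [B [Eg ->]]]]; [right|left]; by exists A, B.
- case=> [[A [B [Ey Eg]]]|[A [B [Ey Eg]]]]; [right|left]; exists A, B => //.
Qed.

Lemma downGS_sub n g : g \in GSn n -> {subset DM (fun _ => true) g <= GSn n}.
Proof.
move=> gP y /downGS U1; move: gP; rewrite !mem_GSn.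
exact: up1_grand_rev U1.
Qed.

Local Close Scope ring_scope.

Theorem mainTheorem11 (n : nat) :
  (forall g : spath, schroder n g ->
     size (Delta n (Sn n) g) = (omega [:: H] g + omega [:: D; U] g)%N /\
     size (Nabla n (Sn n) g) = (omegaHstar g + omega [:: U; D] g)%N) /\
  (forall g : spath, grand n g ->
     size (Delta n (GSn n) g) = (omega [:: H] g + omega [:: D; U] g)%N /\
     size (Nabla n (GSn n) g) = (omega [:: H] g + omega [:: U; D] g)%N).
Proof.
split.
- move=> g Sg; have gP : g \in Sn n by rewrite mem_Sn.
  split.
  + rewrite (size_Delta (M := UM g) (PgoodS n) (undup_uniq _) gP) ?size_UM //.
    * exact: uniq_mvl.
    * exact: mem_UM.
  + rewrite (size_Nabla (M := DM (fun i => hend (take i g) != 0%R) g) (PgoodS n)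
      (undup_uniq _) gP).
    * by rewrite /DM size_mvl // count_Hstar.
    * exact: uniq_mvl.
    * exact: downS_sub.
    * move=> y yP; exact: (downS gP yP).
- move=> g Gg; have gP : g \in GSn n by rewrite mem_GSn.
  split.
  + rewrite (size_Delta (M := UM g) (PgoodGS n) (undup_uniq _) gP) ?size_UM //.
    * exact: uniq_mvl.
    * exact: mem_UM.
  + rewrite (size_Nabla (M := DM (fun _ => true) g) (PgoodGS n) (undup_uniq _) gP).
    * rewrite /DM size_mvl //; congr (_ + _)%N.
      by apply: eq_count => i; rewrite andbT.
    * exact: uniq_mvl.
    * exact: downGS_sub.
    * by move=> y yP; apply: downGS.
Qed.
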